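(* Let $G$ be a group generated by $x_1,\dots,x_n$, with finite commutator subgroup $C=[G,G]$, such that $G/C$ is free abelian of rank $n$ with basis the images of $x_1,\dots,x_n$, and let $\Lambda\subseteq G$ be a generating set of $G$ closed under inversion. Then every element of $C$ can be written as a finite product of links $l_{\mathbf r,\lambda}$ with $\mathbf r\in\mathbb Z^n$ and $\lambda\in\Lambda$.
   Context: Notation: $\bar g=g^{-1}$. For $\mathbf r\in\mathbb Z^n$ put $g_{\mathbf r}=x_1^{r_1}\cdots x_n^{r_n}$. Every $g\in G$ decomposes uniquely as $g=g_{\mathbf r}c$ with $c\in C$; write $\mathbf r_g=\mathbf r$. The link is $l_{\mathbf r,\lambda}=\overline{g_{\mathbf r+\mathbf r_\lambda}}\,\lambda\,g_{\mathbf r}\in C$. *)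

(* Defs.v *)
From mathcomp Require Import all_boot all_algebra.
From Stdlib Require Import List.
Set Implicit Arguments. Unset Strict Implicit. Unset Printing Implicit Defensive.

Record group := Group {
  carrier :> Type;
  gmul : carrier -> carrier -> carrier;
  gone : carrier;
  ginv : carrier -> carrier;
  gmulA : forall a b c, gmul a (gmul b c) = gmul (gmul a b) c;
  gmul1 : forall a, gmul gone a = a;
  gmulV : forall a, gmul (ginv a) a = gone
}.

Section Defs.
Variable G : group.
Local Notation "a * b" := (gmul a b).

Inductive gen (S : G -> Prop) : G -> Prop :=
  | gen_one : gen S (gone G)
  | gen_mem : forall a, S a -> gen S a
  | gen_mul : forall a b, gen S a -> gen S b -> gen S (a * b)
  | gen_inv : forall a, gen S a -> gen S (ginv a).

Definition comm (a b : G) : G := ginv a * (ginv b * (a * b)).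

Definition commutator_subgroup : G -> Prop :=
  gen (fun c => exists a b, c = comm a b).

Definition zpow (a : G) (k : int) : G :=
  match k with
  | Posz m => iter m (@gmul G a) (gone G)
  | Negz m => ginv (iter m.+1 (@gmul G a) (gone G))
  end.

Definition gvec n (x : 'I_n -> G) (r : 'I_n -> int) : G :=
  foldr (@gmul G) (gone G) [seq zpow (x i) (r i) | i <- enum 'I_n].

Definition gprod (s : list G) : G := foldr (@gmul G) (gone G) s.

(* l is a link l_{r,lambda} = (g_{r + r_lambda})^{-1} lambda g_r with lambda in Lambda,
   where r_lambda is the (unique) vector with lambda in g_{r_lambda} C. *)
Definition is_link n (x : 'I_n -> G) (Lambda : G -> Prop) (l : G) : Prop :=
  exists (r rl : 'I_n -> int) (lam : G),
    Lambda lam /\ commutator_subgroup (ginv (gvec x rl) * lam) /\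
    l = ginv (gvec x (fun i => r i + rl i)%R) * lam * gvec x r.
End Defs.

(* Main.v *)
Require Import Defs.
From mathcomp Require Import all_boot all_algebra.
From Stdlib Require Import List.
From mathcomp Require Import zify.
Set Implicit Arguments. Unset Strict Implicit.

Section Aux.
Variable G : group.
Local Notation "a * b" := (@gmul G a b).
Local Notation one := (gone G).
Local Notation inv := (@ginv G).
Local Notation C := (@commutator_subgroup G).

Lemma mulgV (a : G) : a * inv a = one.
Proof.
have e : a * inv a = (inv (inv a) * inv a) * (a * inv a) by rewrite gmulV gmul1.
rewrite e -gmulA (gmulA (inv a) a) gmulV gmul1 gmulV //.
Qed.

Lemma mulg1 (a : G) : a * one = a.
Proof. by rewrite -(gmulV a) gmulA mulgV gmul1. Qed.

Lemma mulKg (a b : G) : inv a * (a * b) = b.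
Proof. by rewrite gmulA gmulV gmul1. Qed.

Lemma mulVKg (a b : G) : a * (inv a * b) = b.
Proof. by rewrite gmulA mulgV gmul1. Qed.

Lemma inv_uniq (u v : G) : u * v = one -> u = inv v.
Proof. move=> h; by rewrite -(mulg1 u) -(mulgV v) gmulA h gmul1. Qed.

Lemma invK (a : G) : inv (inv a) = a.
Proof. symmetry; apply: inv_uniq; exact: mulgV. Qed.

Lemma invM (a b : G) : inv (a * b) = inv b * inv a.
Proof. symmetry; apply: inv_uniq. by rewrite -gmulA mulKg gmulV. Qed.

Lemma inv1 : inv one = one.
Proof. symmetry; apply: inv_uniq; exact: gmul1. Qed.

Lemma C1 : C one. Proof. exact: gen_one. Qed.
Lemma CM a b : C a -> C b -> C (a * b). Proof. exact: gen_mul. Qed.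
Lemma CV a : C a -> C (inv a). Proof. exact: gen_inv. Qed.
Lemma Ccomm a b : C (comm a b). Proof. apply: gen_mem; by exists a, b. Qed.

Lemma Cconj (a y : G) : C y -> C (inv a * y * a).
Proof.
move=> hy.
have -> : inv a * y * a = y * comm y a by rewrite /comm mulVKg gmulA.
apply: CM hy (Ccomm _ _).
Qed.
Arguments Cconj a [y].

Definition eqm (a b : G) := C (inv a * b).

Lemma eqm_refl a : eqm a a. Proof. rewrite /eqm gmulV; exact C1. Qed.
Lemma eqm_eq a b : a = b -> eqm a b. Proof. move=> ->; exact: eqm_refl. Qed.
Lemma eqm_sym a b : eqm a b -> eqm b a.
Proof. rewrite /eqm => h. have := CV h. by rewrite invM invK. Qed.
Lemma eqm_trans a b c : eqm a b -> eqm b c -> eqm a c.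
Proof. rewrite /eqm => h1 h2. have := CM h1 h2. by rewrite -gmulA mulVKg. Qed.
Lemma eqm_mul a a' b b' : eqm a a' -> eqm b b' -> eqm (a * b) (a' * b').
Proof.
rewrite /eqm => h1 h2.
have e : inv (a * b) * (a' * b') = (inv b * (inv a * a') * b) * (inv b * b').
  by rewrite invM -!gmulA mulVKg.
rewrite e; apply: CM h2; exact: Cconj.
Qed.
Lemma eqm_comm a b : eqm (a * b) (b * a).
Proof. rewrite /eqm invM -gmulA; exact: Ccomm. Qed.
Lemma eqm_inv a b : eqm a b -> eqm (inv a) (inv b).
Proof.
rewrite /eqm invK => h.
have := Cconj (inv a) (CV h).
by rewrite invK invM invK -!gmulA mulgV mulg1.
Qed.
Lemma eqm_C a b : eqm a b -> C b -> C a.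
Proof.
rewrite /eqm => h hb. have := CM hb (CV h). by rewrite invM invK mulVKg.
Qed.

Lemma pw_comm (a : G) m : a * iter m (gmul a) one = iter m (gmul a) one * a.
Proof.
elim: m => [|m IH] /=; first by rewrite mulg1 gmul1.
by rewrite {1}IH gmulA.
Qed.

Lemma zpowS (a : G) (k : int) : zpow a (k + 1)%R = a * zpow a k.
Proof.
case: k => [m|m].
  by rewrite -PoszD addn1.
case: m => [|m].
  have -> : (Negz 0 + 1 = 0)%R by [].
  by rewrite /= mulg1 mulgV.
have -> : (Negz m.+1 + 1 = Negz m)%R by rewrite !NegzE; lia.
have e := pw_comm a m.+1.
rewrite /= in e *.
by rewrite e [inv (_ * a)]invM mulVKg.
Qed.

Lemma zpowB1 (a : G) (k : int) : zpow a (k - 1)%R = inv a * zpow a k.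
Proof.
have := zpowS a (k - 1)%R. rewrite GRing.subrK => ->.
by rewrite mulKg.
Qed.

Lemma zpowD (a : G) (m k : int) : zpow a (m + k)%R = zpow a m * zpow a k.
Proof.
case: m => [p|p].
  elim: p => [|p IH]; first by rewrite GRing.add0r gmul1.
  have -> : (Posz p.+1 + k = (Posz p + k) + 1)%R by lia.
  have -> : Posz p.+1 = (Posz p + 1)%R by lia.
  by rewrite !zpowS IH gmulA.
elim: p => [|p IH].
  have -> : (Negz 0 + k = k - 1)%R by rewrite NegzE; lia.
  by rewrite zpowB1 /= mulg1.
have -> : (Negz p.+1 + k = (Negz p + k) - 1)%R by rewrite !NegzE; lia.
have -> : Negz p.+1 = (Negz p - 1)%R by rewrite !NegzE; lia.
by rewrite !zpowB1 IH gmulA.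
Qed.

Variable n : nat.
Variable x : 'I_n -> G.

Definition F (r : 'I_n -> int) (l : list 'I_n) :=
  foldr (@gmul G) one [seq zpow (x i) (r i) | i <- l].

Lemma F_add r s l :
  eqm (F (fun i => r i + s i)%R l) (F r l * F s l).
Proof.
elim: l => [|i l IH] /=.
  rewrite /F /= gmul1; exact: eqm_refl.
rewrite /F /= -/(F _ l) -/(F r l) -/(F s l) zpowD.
apply: (eqm_trans (eqm_mul (eqm_refl _) IH)).
set zr := zpow (x i) (r i); set zs := zpow (x i) (s i).
have e1 : zr * zs * (F r l * F s l) = (zr * (zs * F r l)) * F s l by rewrite !gmulA.
rewrite e1.
have e2 : zr * F r l * (zs * F s l) = (zr * (F r l * zs)) * F s l by rewrite !gmulA.
rewrite e2.
apply: eqm_mul (eqm_refl _).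
apply: eqm_mul (eqm_refl _) _.
exact: eqm_comm.
Qed.

Lemma gvec_add r s :
  eqm (gvec x (fun i => r i + s i)%R) (gvec x r * gvec x s).
Proof. exact: F_add. Qed.

Lemma F_zero r l : (forall i, r i = 0%R) -> F r l = one.
Proof.
move=> h; elim: l => [|i l IH] //=.
by rewrite /F /= -/(F r l) IH h mulg1.
Qed.

Lemma gvec_zero r : (forall i, r i = 0%R) -> gvec x r = one.
Proof. exact: F_zero. Qed.

Lemma F_delta (i : 'I_n) l : uniq l ->
  F (fun j => if j == i then 1%R else 0%R) l = if i \in l then x i else one.
Proof.
elim: l => [|j l IH] //= /andP [hj hu].
rewrite /F /= -/(F _ l) IH // seq.in_cons.
have [eji|ne] := eqVneq j i.
  subst j; by rewrite (negbTE hj) /= !mulg1.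
by rewrite /= gmul1.
Qed.

Lemma rep : (forall g : G, gen (fun a => exists i, a = x i) g) ->
  forall g : G, exists r, eqm (gvec x r) g.
Proof.
move=> hgen g; elim: (hgen g).
- exists (fun _ => 0%R); rewrite gvec_zero //; exact: eqm_refl.
- move=> a [i ->]; exists (fun j => if j == i then 1%R else 0%R).
  rewrite /gvec -/(F _ _) F_delta ?enum_uniq // mem_enum; exact: eqm_refl.
- move=> a b _ [r hr] _ [s hs]; exists (fun i => r i + s i)%R.
  apply: eqm_trans (gvec_add r s) _; exact: eqm_mul.
- move=> a _ [r hr]; exists (fun i => - r i)%R.
  apply: eqm_trans _ (eqm_inv hr).
  have h0 := gvec_add (fun i => - r i)%R r.
  rewrite gvec_zero in h0; last by move=> i; rewrite GRing.addNr.
  rewrite /eqm inv1 gmul1 in h0.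
  rewrite /eqm -invM; apply: CV.
  have := Cconj (inv (gvec x r)) h0.
  by rewrite invK -!gmulA mulgV mulg1.
Qed.

Lemma gprod_cat (l1 l2 : list G) : gprod (l1 ++ l2) = gprod l1 * gprod l2.
Proof. elim: l1 => [|a l IH] /=; first by rewrite gmul1. by rewrite IH gmulA. Qed.

Lemma gprod_Lambda (Lambda : G -> Prop) :
  (forall lam : G, Lambda lam -> Lambda (inv lam)) ->
  forall g, gen Lambda g -> exists L : list G, (forall l, List.In l L -> Lambda l) /\ g = gprod L.
Proof.
move=> hinv g; elim.
- by exists nil.
- move=> a ha; exists (a :: nil); split; first by move=> l [<-|[]].
  by rewrite /= mulg1.
- move=> a b _ [L1 [h1 ->]] _ [L2 [h2 ->]]; exists (L1 ++ L2); split.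
    by move=> l hl; case: (in_app_or _ _ _ hl); auto.
  by rewrite gprod_cat.
- move=> a _ [L [h ->]]; exists (List.rev (List.map inv L)); split.
    move=> l hl; apply in_rev in hl; apply in_map_iff in hl.
    destruct hl as [y [<- hy]]; auto.
  elim: L {h} => [|y L IH] /=; first by rewrite inv1.
  by rewrite gprod_cat /= -IH invM mulg1.
Qed.

End Aux.

Theorem lemma1 (G : group) (n : nat) (x : 'I_n -> G) (Lambda : G -> Prop) :
  (* G is generated by x_1, ..., x_n *)
  (forall g : G, gen (fun a => exists i, a = x i) g) ->
  (* C = [G,G] is finite *)
  (exists s : list G, forall c, commutator_subgroup c -> List.In c s) ->
  (* the images of x_1..x_n in G/C are linearly independent (they span since the
     x_i generate G), i.e. G/C is free abelian with basis the images of the x_i *)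
  (forall r : 'I_n -> int, commutator_subgroup (gvec x r) -> forall i, r i = 0%R) ->
  (* Lambda generates G and is closed under inversion *)
  (forall g : G, gen Lambda g) ->
  (forall lam : G, Lambda lam -> Lambda (ginv lam)) ->
  forall c : G, commutator_subgroup c ->
    exists ls : list G, (forall l, List.In l ls -> is_link x Lambda l) /\ c = gprod ls.
Proof.
move=> hx _ hind hL hinv c hc.
have [L [hLL hcL]] := gprod_Lambda hinv (hL c).
subst c.
suff key : forall t, exists s ls, (forall l, List.In l ls -> is_link x Lambda l) /\
    gprod ls = gmul (gmul (ginv (gvec x s)) (gprod L)) (gvec x t) /\
    eqm (gvec x s) (gmul (gprod L) (gvec x t)).
  have [s [ls [hl [he hq]]]] := key (fun _ => 0%R).
  have hz : forall i, (fun _ : 'I_n => 0%R : int) i = 0%R by [].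
  rewrite (gvec_zero x hz) mulg1 mulg1 in he hq.
  have hs := hind s (eqm_C hq hc).
  rewrite (gvec_zero x hs) inv1 gmul1 in he.
  by exists ls; split.
clear hc.
elim: L hLL => [|lam L IH] hLL t.
  exists t, nil; split => //; split; first by rewrite /= mulg1 gmulV.
  rewrite /= gmul1; exact: eqm_refl.
have [s' [ls' [hl' [he' hq']]]] := IH (fun l h => hLL l (or_intror h)) t.
have hlam : Lambda lam := hLL lam (or_introl erefl).
have [rl hrl] := rep hx lam.
exists (fun i => s' i + rl i)%R.
exists (gmul (gmul (ginv (gvec x (fun i => s' i + rl i)%R)) lam) (gvec x s') :: ls').
split.
  move=> l [<-|hl]; last exact: hl'.
  exists s', rl, lam; split => //; split => //.
split.
  rewrite /= he' -!gmulA; congr gmul; congr gmul.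
  by rewrite !gmulA mulgV gmul1.
apply: eqm_trans (gvec_add _ _ _) _.
apply: eqm_trans (eqm_comm _ _) _.
rewrite /= -gmulA; exact: eqm_mul.
Qed.
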